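(* Let $a\ge b\ge k$ be positive integers. Then, as elements of $\operatorname{Hom}_G(\Lambda^a\otimes\Lambda^b,\Lambda^a\otimes\Lambda^b)$, \[\phi_k=\sum_{t=0}^{k}(-1)^t\binom{b-t}{k-t}\Phi_t\qquad\text{and}\qquad\psi_k=\sum_{t=1}^{k}(-1)^{t-1}\binom{b-t}{k-t}\Phi_t.\]
   Context: $K$ is a field of characteristic zero, $G=GL(n,K)$, $V=K^n$, $\Lambda=\bigoplus_i\Lambda^i$ the exterior algebra of $V$. $m$ is multiplication and $\Delta_{s,t}:\Lambda^{s+t}\to\Lambda^s\otimes\Lambda^t$ the comultiplication component $v_1\cdots v_{s+t}\mapsto\sum_\sigma\mathrm{sgn}(\sigma)v_{\sigma(1)}\cdots v_{\sigma(s)}\otimes v_{\sigma(s+1)}\cdots v_{\sigma(s+t)}$ (permutations increasing on the first $s$ and last $t$ positions). For $0\le t\le b$: $\delta_t=(m\otimes1)\circ(1\otimes\Delta_{t,b-t}):\Lambda^a\otimes\Lambda^b\to\Lambda^{a+t}\otimes\Lambda^{b-t}$, $\theta_t=(1\otimes m)\circ(\Delta_{a,t}\otimes1):\Lambda^{a+t}\otimes\Lambda^{b-t}\to\Lambda^a\otimes\Lambda^b$, $\Phi_t=\theta_t\circ\delta_t$. $\phi_k$ is the composition $(m\otimes m)\circ(1\otimes\tau\otimes1)\circ(\Delta_{a-k,k}\otimes\Delta_{k,b-k}):\Lambda^a\otimes\Lambda^b\to\Lambda^a\otimes\Lambda^b$, where $\tau:\Lambda^k\otimes\Lambda^k\to\Lambda^k\otimes\Lambda^k$,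 $w\otimes z\mapsto z\otimes w$; and $\psi_k=\binom{b}{k}1_{\Lambda^a\otimes\Lambda^b}-\phi_k$. *)

(* Defs.v *)
From HB Require Import structures.
From mathcomp Require Import all_boot all_order all_algebra.
Set Implicit Arguments. Unset Strict Implicit. Unset Printing Implicit Defensive.
Import Order.TTheory GRing.Theory Num.Theory.
Local Open Scope ring_scope.

(* V = K^n with standard basis e_0,...,e_{n-1}.  For S : {set 'I_n}, e_S is the
   wedge of the e_i (i in S) in increasing order; these form a basis of
   Lambda^{#|S|}.  An element of Lambda (x) Lambda is represented by its
   coefficient function on the basis e_S (x) e_T. *)
Notation tens K n := {ffun {set 'I_n} * {set 'I_n} -> (GRing.regular K)}.

Definition bas (K : fieldType) n (S T : {set 'I_n}) : tens K n :=
  [ffun p => ((p == (S, T)) : bool)%:R].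

Definition linext (K : fieldType) n (f : {set 'I_n} -> {set 'I_n} -> tens K n)
  (x : tens K n) : tens K n := \sum_(p : {set 'I_n} * {set 'I_n}) x p *: f p.1 p.2.

(* e_S /\ e_T = wsign S T * e_(S :|: T): zero if S, T intersect, otherwise the
   sign of the shuffle sorting S ++ T, i.e. (-1)^#{(s,t) in S x T | s > t}. *)
Definition wsign (K : fieldType) n (S T : {set 'I_n}) : K :=
  if [disjoint S & T]
  then (-1) ^+ #|[set p in setX S T | (val p.2 < val p.1)%N]|
  else 0.

(* Delta_{s, #|U|-s}(e_U) = sum_{A subset U, #|A| = s} wsign A (U :\: A) e_A (x) e_(U:\:A) *)

(* delta_t = (m (x) 1) o (1 (x) Delta_{t, b-t}) *)
Definition delta (K : fieldType) n (t : nat) : tens K n -> tens K n :=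
  linext (fun S T =>
    \sum_(A : {set 'I_n} | (A \subset T) && (#|A| == t))
      (wsign K A (T :\: A) * wsign K S A) *: bas K (S :|: A) (T :\: A)).

(* theta_t = (1 (x) m) o (Delta_{a,t} (x) 1) on Lambda^{a+t} (x) Lambda^{b-t} *)
Definition theta (K : fieldType) n (a t : nat) : tens K n -> tens K n :=
  linext (fun P Q =>
    \sum_(B : {set 'I_n} | (B \subset P) && (#|B| == a))
      (wsign K B (P :\: B) * wsign K (P :\: B) Q) *: bas K B ((P :\: B) :|: Q)).

Definition Phi (K : fieldType) n (a t : nat) (x : tens K n) : tens K n :=
  theta a t (delta t x).

(* phi_k = (m (x) m) o (1 (x) tau (x) 1) o (Delta_{a-k,k} (x) Delta_{k,b-k}),
   tau(w (x) z) = z (x) w (no sign). *)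
Definition phi (K : fieldType) n (a k : nat) : tens K n -> tens K n :=
  linext (fun S T =>
    \sum_(A : {set 'I_n} | (A \subset S) && (#|A| == (a - k)%N))
    \sum_(C : {set 'I_n} | (C \subset T) && (#|C| == k))
      (wsign K A (S :\: A) * wsign K C (T :\: C) * wsign K A C
         * wsign K (S :\: A) (T :\: C))
      *: bas K (A :|: C) ((S :\: A) :|: (T :\: C))).

Definition psi (K : fieldType) n (a b k : nat) (x : tens K n) : tens K n :=
  'C(b, k)%:R *: x - phi a k x.

Definition in_bideg (K : fieldType) n (a b : nat) (x : tens K n) : Prop :=
  forall p, x p != 0 -> #|p.1| = a /\ #|p.2| = b.

(* Main.v *)
Require Import Defs.
From HB Require Import structures.
From mathcomp Require Import all_boot all_order all_algebra.
From mathcomp Require Import zify ring.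
Set Implicit Arguments. Unset Strict Implicit. Unset Printing Implicit Defensive.
Import Order.TTheory GRing.Theory Num.Theory.
Local Open Scope ring_scope.



Definition inv n (X Y : {set 'I_n}) : nat :=
  #|[set p in setX X Y | (val p.2 < val p.1)%N]|.

Lemma wsignE (K : fieldType) n (X Y : {set 'I_n}) :
  wsign K X Y = if [disjoint X & Y] then (-1) ^+ inv X Y else 0.
Proof. by []. Qed.

Lemma disjP n (A B : {set 'I_n}) :
  reflect (forall x, x \in A -> x \in B -> False) [disjoint A & B].
Proof.
apply: (iffP idP) => [h x xa xb| h].
  by rewrite (disjointFr h xa) in xb.
by rewrite -setI_eq0; apply/eqP/setP => x; rewrite !inE;
   apply/negbTE/negP => /andP[? ?]; apply: (h x).
Qed.

Lemma invE n (X Y : {set 'I_n}) :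
  inv X Y = (\sum_(x in X) \sum_(y in Y) (val y < val x)%N)%N.
Proof.
rewrite /inv -sum1_card big_mkcond /=.
transitivity (\sum_x \sum_y (if (x \in X) && (y \in Y) && (val y < val x)%N then 1 else 0))%N.
  rewrite pair_big /=; apply: eq_bigr => -[x y] _; rewrite !inE /=.
  by case: (x \in X); case: (y \in Y).
rewrite [RHS]big_mkcond; apply: eq_bigr => x _.
case: (boolP (x \in X)) => hx /=; rewrite ?[RHS]big_mkcond.
  by apply: eq_bigr => y _; case: (y \in Y); case: (val y < val x)%N.
by rewrite big1.
Qed.

Lemma cardsUd n (A B : {set 'I_n}) : [disjoint A & B] -> #|A :|: B| = (#|A| + #|B|)%N.
Proof. by rewrite -setI_eq0 cardsU => /eqP ->; rewrite cards0 subn0. Qed.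

Lemma invUl n (A B C : {set 'I_n}) : [disjoint A & B] ->
  inv (A :|: B) C = (inv A C + inv B C)%N.
Proof.
move=> h; rewrite !invE.
rewrite (eq_bigl (fun x => (x \in A) || (x \in B))); last by move=> x; rewrite inE.
by rewrite bigU.
Qed.

Lemma invUr n (A B C : {set 'I_n}) : [disjoint B & C] ->
  inv A (B :|: C) = (inv A B + inv A C)%N.
Proof.
move=> h; rewrite !invE.
transitivity (\sum_(x in A) (\sum_(y in B) (val y < val x) + \sum_(y in C) (val y < val x)))%N; last first.
  by rewrite big_split.
apply: eq_bigr => x _.
rewrite (eq_bigl (fun y => (y \in B) || (y \in C))); last by move=> y; rewrite inE.
by rewrite bigU.
Qed.

Lemma invC n (A B : {set 'I_n}) : [disjoint A & B] ->
  (inv A B + inv B A)%N = (#|A| * #|B|)%N.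
Proof.
move=> h; rewrite !invE [X in (_ + X)%N]exchange_big /=.
rewrite -sum_nat_const.
transitivity (\sum_(x in A) \sum_(y in B) ((val y < val x) + (val x < val y)))%N.
  by rewrite -big_split; apply: eq_bigr => x _; rewrite big_split.
apply: eq_bigr => x xa.
rewrite -sum1_card; apply: eq_bigr => y yb.
have : x != y by apply/eqP => e; rewrite e in xa; move/disjP: h => /(_ y xa yb).
rewrite -val_eqE; case: ltngtP => //.
Qed.

Lemma disjUl n (A B C : {set 'I_n}) :
  [disjoint A :|: B & C] = [disjoint A & C] && [disjoint B & C].
Proof.
apply/disjP/andP => [h|[/disjP h1 /disjP h2] x].
  by split; apply/disjP => x xa xc; apply: (h x) => //; rewrite inE ?xa ?xc ?orbT.
by rewrite inE => /orP[] ? ?; [apply: (h1 x) | apply: (h2 x)].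
Qed.

Lemma wsignUl (K : fieldType) n (A B C : {set 'I_n}) : [disjoint A & B] ->
  wsign K (A :|: B) C = wsign K A C * wsign K B C.
Proof.
move=> h; rewrite !wsignE disjUl invUl // exprD.
by case: [disjoint A & C]; case: [disjoint B & C]; rewrite ?mulr0 ?mul0r.
Qed.

Lemma wsignUr (K : fieldType) n (A B C : {set 'I_n}) : [disjoint B & C] ->
  wsign K A (B :|: C) = wsign K A B * wsign K A C.
Proof.
move=> h; rewrite !wsignE (disjoint_sym A) disjUl invUr // exprD.
rewrite !(disjoint_sym _ A).
by case: [disjoint A & B]; case: [disjoint A & C]; rewrite ?mulr0 ?mul0r.
Qed.

Lemma wsignD (K : fieldType) n (A B : {set 'I_n}) : [disjoint A & B] ->
  wsign K A B = (-1) ^+ inv A B.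
Proof. by move=> h; rewrite wsignE h. Qed.

Lemma wsignN (K : fieldType) n (A B : {set 'I_n}) : ~~ [disjoint A & B] ->
  wsign K A B = 0.
Proof. by move=> h; rewrite wsignE (negbTE h). Qed.

Lemma sgn_eq (K : fieldType) (e1 e2 : nat) : (e1 %% 2 = e2 %% 2)%N ->
  (-1) ^+ e1 = (-1) ^+ e2 :> K.
Proof. by move=> h; rewrite -signr_odd -modn2 h modn2 signr_odd. Qed.

Ltac casemem :=
  repeat match goal with |- context [?x \in ?A] => case: (x \in A) end.

Ltac brute :=
  let x := fresh "x" in
  (apply/setP || apply/disjP || apply/subsetP); intro x;
  repeat match goal with H : is_true (?A \subset ?B) |- _ =>
    move: (subsetP H x) => /implyP; clear H end;
  rewrite ?inE; casemem; done.

Definition s1 (K : fieldType) n (S T A C : {set 'I_n}) : K :=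
  wsign K A (S :\: A) * wsign K C (T :\: C) * wsign K A C * wsign K (S :\: A) (T :\: C).

Lemma SL1 (K : fieldType) n (S T D1 J C : {set 'I_n}) :
  D1 \subset S :\: T -> J \subset S :&: T -> C \subset T :\: S -> #|C| = #|D1| ->
  s1 K S T (S :\: (D1 :|: J)) (C :|: J) = s1 K S T (S :\: D1) C.
Proof.
move=> hD hJ hC hc.
rewrite /s1.
have -> : S :\: (S :\: (D1 :|: J)) = D1 :|: J by brute.
have -> : S :\: (D1 :|: J) = ((S :\: T) :\: D1) :|: ((S :&: T) :\: J) by brute.
have -> : T :\: (C :|: J) = ((T :\: S) :\: C) :|: ((S :&: T) :\: J) by brute.
have -> : S :\: (S :\: D1) = D1 by brute.
have -> : S :\: D1 = ((S :\: T) :\: D1) :|: (((S :&: T) :\: J) :|: J) by brute.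
have -> : T :\: C = ((T :\: S) :\: C) :|: (((S :&: T) :\: J) :|: J) by brute.
rewrite !wsignUl ?wsignUr; try by brute.
rewrite !wsignD; try by brute.
rewrite !mulrA -!exprD; apply: sgn_eq.
have h1 : [disjoint J & D1] by brute.
have h2 : [disjoint C & J] by brute.
move: (invC h1) (invC h2); rewrite hc; lia.
Qed.

Definition s2 (K : fieldType) n (S T A D : {set 'I_n}) : K :=
  wsign K A (T :\: A) * wsign K S A * (wsign K ((S :|: A) :\: D) D * wsign K D (T :\: A)).

Lemma SL2 (K : fieldType) n (S T D1 C D2 : {set 'I_n}) :
  D1 \subset S :\: T -> C \subset T :\: S -> D2 \subset (T :\: S) :\: C ->
  s2 K S T (C :|: D2) (D1 :|: D2) = s2 K S T C D1.
Proof.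
move=> hD hC hD2; rewrite /s2.
have -> : T :\: (C :|: D2) = ((T :\: S) :\: C :\: D2) :|: (S :&: T) by brute.
have -> : (S :|: (C :|: D2)) :\: (D1 :|: D2) = ((S :\: T) :\: D1) :|: ((S :&: T) :|: C) by brute.
have -> : T :\: C = ((T :\: S) :\: C :\: D2) :|: (D2 :|: (S :&: T)) by brute.
have -> : (S :|: C) :\: D1 = ((S :\: T) :\: D1) :|: ((S :&: T) :|: C) by brute.
have eS : S = ((S :\: T) :\: D1) :|: (D1 :|: (S :&: T)) by brute.
rewrite [in wsign K S (C :|: D2)]eS [in wsign K S C]eS.
rewrite !wsignUl ?wsignUr; try by brute.
rewrite !wsignD; try by brute.
rewrite !mulrA -!exprD; apply: sgn_eq.
lia.
Qed.

Lemma SL3 (K : fieldType) n (S T D1 C : {set 'I_n}) :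
  D1 \subset S :\: T -> C \subset T :\: S -> #|C| = #|D1| ->
  s1 K S T (S :\: D1) C = (-1) ^+ #|D1| * s2 K S T C D1.
Proof.
move=> hD hC hc; rewrite /s1 /s2.
have -> : S :\: (S :\: D1) = D1 by brute.
have -> : S :\: D1 = ((S :\: T) :\: D1) :|: (S :&: T) by brute.
have -> : T :\: C = ((T :\: S) :\: C) :|: (S :&: T) by brute.
have -> : (S :|: C) :\: D1 = ((S :\: T) :\: D1) :|: ((S :&: T) :|: C) by brute.
have eS : S = ((S :\: T) :\: D1) :|: (D1 :|: (S :&: T)) by brute.
rewrite [in wsign K S C]eS.
rewrite !wsignUl ?wsignUr; try by brute.
rewrite !wsignD; try by brute.
rewrite !mulrA -!exprD; apply: sgn_eq.
have h1 : [disjoint D1 & C] by brute.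
have h2 : ((#|D1| * #|D1|) %% 2 = #|D1| %% 2)%N by rewrite !modn2 oddM andbb.
move: (invC h1) h2; rewrite hc; lia.
Qed.



Lemma disjb n (A B : {set 'I_n}) : [disjoint A & B] -> forall x, ~~ ((x \in A) && (x \in B)).
Proof. by move/disjP=> h x; apply/negP => /andP[] /h. Qed.


Ltac brute2 :=
  let x := fresh "x" in
  (apply/setP || apply/disjP || apply/subsetP); intro x;
  repeat match goal with
  | H : is_true (?A \subset ?B) |- _ => move: (subsetP H x) => /implyP; clear H
  | H : is_true [disjoint ?A & ?B] |- _ => move: (disjb H x); clear H
  | H : ?A = ?B |- _ => move/setP: H => /(_ x)
  end;
  rewrite ?inE; casemem; done.

Lemma sum_compl (V : nmodType) n (S : {set 'I_n}) (P : pred {set 'I_n})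
  (F : {set 'I_n} -> V) :
  \sum_(A : {set 'I_n} | (A \subset S) && P A) F A =
  \sum_(D : {set 'I_n} | (D \subset S) && P (S :\: D)) F (S :\: D).
Proof.
rewrite (reindex_onto (fun D : {set 'I_n} => S :\: D) (fun A : {set 'I_n} => S :\: A)) /=; last first.
  by move=> A /andP[h _]; brute2.
apply: eq_bigl => D; rewrite subsetDl /=.
case: (boolP (D \subset S)) => h; rewrite ?andbT ?andbF /=.
  have e : S :\: (S :\: D) = D by brute2.
  by rewrite e eqxx andbT.
apply: negbTE; apply/negP => /andP[_ /eqP e]; move/negP: h; apply; rewrite -e; exact: subsetDl.
Qed.

Lemma sum_split (V : nmodType) n (U W X : {set 'I_n}) (F : {set 'I_n} -> V) :
  [disjoint U & W] -> U :|: W = X ->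
  \sum_(D : {set 'I_n} | D \subset X) F D =
  \sum_(D1 : {set 'I_n} | D1 \subset U) \sum_(D2 : {set 'I_n} | D2 \subset W) F (D1 :|: D2).
Proof.
move=> hd eX; rewrite pair_big_dep /=.
rewrite (reindex_onto (fun p : {set 'I_n} * {set 'I_n} => p.1 :|: p.2) (fun D : {set 'I_n} => (D :&: U, D :&: W))) /=; last first.
  by move=> D h; subst X; brute2.
apply: eq_bigl => -[A B] /=; apply/andP/andP => [[_ /eqP [<- <-]]| [hA hB]].
  by rewrite !subsetIr.
split; first by subst X; brute2.
apply/eqP; congr pair; brute2.
Qed.

Lemma sum_restrict (V : nmodType) n (U W : {set 'I_n}) (F : {set 'I_n} -> V) :
  U \subset W -> (forall D : {set 'I_n}, D \subset W -> ~~ (D \subset U) -> F D = 0) ->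
  \sum_(D : {set 'I_n} | D \subset W) F D = \sum_(D : {set 'I_n} | D \subset U) F D.
Proof.
move=> hUW h; rewrite (bigID (fun D : {set 'I_n} => D \subset U)) /= [X in _ + X]big1 ?addr0.
  by apply: eq_bigl => D; case e: (D \subset U); rewrite ?andbF ?andbT // (subset_trans e).
by move=> D /andP[]; apply: h.
Qed.

Lemma sum_pairs (V : nmodType) n (W : {set 'I_n}) (H : {set 'I_n} -> {set 'I_n} -> V) :
  \sum_(A : {set 'I_n} | A \subset W) \sum_(D2 : {set 'I_n} | D2 \subset A) H A D2 =
  \sum_(C : {set 'I_n} | C \subset W) \sum_(D2 : {set 'I_n} | D2 \subset W :\: C) H (C :|: D2) D2.
Proof.
rewrite !pair_big_dep /=.
rewrite (reindex_onto (fun p : {set 'I_n} * {set 'I_n} => (p.1 :|: p.2, p.2)) (fun p : {set 'I_n} * {set 'I_n} => (p.1 :\: p.2, p.2))) /=; last first.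
  move=> [A B] /= /andP[h1 h2]; congr pair; brute2.
apply: eq_bigl => -[C D] /=; apply/andP/andP => [[/andP[h1 h2] /eqP [e]]| [hC hD]].
  split; brute2.
split; first by apply/andP; split; brute2.
by apply/eqP; congr pair; brute2.
Qed.

Lemma sum_count (V : nmodType) n (I : {set 'I_n}) m (c : V) :
  \sum_(J : {set 'I_n} | J \subset I) (if #|J| == m then c else 0) = c *+ 'C(#|I|, m).
Proof.
rewrite -big_mkcondr (eq_bigl (mem [set J : {set 'I_n} | J \subset I & #|J| == m])).
  by rewrite sumr_const cards_draws.
by move=> J; rewrite !inE.
Qed.



Lemma linext_add (K : fieldType) n f (u v : tens K n) :
  linext f (u + v) = linext f u + linext f v.
Proof.
rewrite /linext -big_split /=; apply: eq_bigr => p _.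
by rewrite ffunE scalerDl.
Qed.

Lemma linext0 (K : fieldType) n f : linext f (0 : tens K n) = 0.
Proof. by rewrite /linext big1 // => p _; rewrite ffunE scale0r. Qed.

Lemma linext_scale (K : fieldType) n f (c : K) (u : tens K n) :
  linext f (c *: u) = c *: linext f u.
Proof.
rewrite /linext scaler_sumr; apply: eq_bigr => p _.
by rewrite ffunE scalerA.
Qed.

Lemma linext_sum (K : fieldType) n f (I : Type) (r : seq I) (P : pred I)
  (F : I -> tens K n) :
  linext f (\sum_(i <- r | P i) F i) = \sum_(i <- r | P i) linext f (F i).
Proof. exact: (big_morph (linext f) (linext_add f) (linext0 f)). Qed.

Lemma linext_bas (K : fieldType) n f (P Q : {set 'I_n}) :
  linext f (bas K P Q) = f P Q.
Proof.
rewrite /linext (bigD1 (P, Q)) //= big1 ?addr0.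
  by rewrite ffunE eqxx scale1r.
by move=> p /negbTE hp; rewrite ffunE hp scale0r.
Qed.

Lemma linext_comp (K : fieldType) n f g (x : tens K n) :
  linext g (linext f x) = \sum_p x p *: linext g (f p.1 p.2).
Proof.
rewrite [X in linext g X]/linext linext_sum; apply: eq_bigr => p _.
by rewrite linext_scale.
Qed.

Lemma bas_expand (K : fieldType) n (x : tens K n) :
  x = \sum_p x p *: bas K p.1 p.2.
Proof.
apply/ffunP => q; rewrite sum_ffunE (bigD1 q) //= big1 ?addr0.
  by rewrite !ffunE -surjective_pairing eqxx; exact: esym (mulr1 _).
by move=> p hp; rewrite !ffunE -surjective_pairing eq_sym (negbTE hp); exact: mulr0.
Qed.



Definition phB (K : fieldType) n (a k : nat) (S T : {set 'I_n}) : tens K n :=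
    \sum_(A : {set 'I_n} | (A \subset S) && (#|A| == (a - k)%N))
    \sum_(C : {set 'I_n} | (C \subset T) && (#|C| == k))
      s1 K S T A C *: bas K (A :|: C) ((S :\: A) :|: (T :\: C)).

Definition dB (K : fieldType) n (t : nat) (S T : {set 'I_n}) : tens K n :=
    \sum_(A : {set 'I_n} | (A \subset T) && (#|A| == t))
      (wsign K A (T :\: A) * wsign K S A) *: bas K (S :|: A) (T :\: A).

Definition thB (K : fieldType) n (a t : nat) (P Q : {set 'I_n}) : tens K n :=
    \sum_(B : {set 'I_n} | (B \subset P) && (#|B| == a))
      (wsign K B (P :\: B) * wsign K (P :\: B) Q) *: bas K B ((P :\: B) :|: Q).

Lemma phiE (K : fieldType) n a k : @phi K n a k = linext (@phB K n a k).
Proof. by []. Qed.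
Lemma PhiE (K : fieldType) n a t (x : tens K n) :
  Phi a t x = linext (@thB K n a t) (linext (@dB K n t) x).
Proof. by []. Qed.

Ltac memb x := repeat match goal with
 | H : is_true (?A \subset ?B) |- _ => move: (subsetP H x) => /implyP; clear H
 | H : is_true (x \in ?A) |- _ => move: H
 | H : is_true (x \notin ?A) |- _ => move: H
 end; rewrite ?inE; casemem; done.

Lemma cond_eq (c d j k : nat) : (d + j = k ->
  (c + j == k) = (c == d) && (d <= k) && (j == k - d))%N.
Proof.
move=> h; case: (c + j =P k) => e; case: (c =P d) => e2; case: (j =P (k - d)%N) => e3;
  case: leqP => e4 /=; first [done | exfalso; lia].
Qed.

Lemma eqnatP (x y : nat) : reflect (x = y) (x == y).
Proof. exact: eqP. Qed.

Definition E (K : fieldType) n (S T D1 C : {set 'I_n}) : tens K n :=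
  bas K ((S :\: D1) :|: C) (D1 :|: (T :\: C)).

Lemma phB_expand (K : fieldType) n a k (S T : {set 'I_n}) :
  #|S| = a -> (k <= a)%N ->
  phB K a k S T = \sum_(D1 : {set 'I_n} | D1 \subset S :\: T)
     \sum_(C : {set 'I_n} | C \subset T :\: S)
     (if (#|C| == #|D1|) && (#|D1| <= k)%N
      then s1 K S T (S :\: D1) C *+ 'C(#|S :&: T|, k - #|D1|) else 0) *: E K S T D1 C.
Proof.
move=> hS hk; rewrite /phB sum_compl.
rewrite (eq_bigl (fun D : {set 'I_n} => (D \subset S) && (#|D| == k))); last first.
  move=> D; case: (boolP (D \subset S)) => //= h.
  have h2 := subset_leq_card (subsetIl S D).
  rewrite cardsD; rewrite (setIidPr h) hS in h2 *.
  by apply/idP/idP => /eqnatP e; apply/eqnatP; set d := #|D| in e h2 *; lia.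
rewrite big_mkcondr /=.
rewrite (@sum_split _ _ (S :\: T) (S :&: T) S); try by brute2.
apply: eq_bigr => D1 hD1.
transitivity (\sum_(J : {set 'I_n} | J \subset S :&: T) \sum_(C : {set 'I_n} | C \subset T :\: S)
  (if (#|C| == #|D1|) && (#|D1| <= k)%N && (#|J| == k - #|D1|)%N
   then s1 K S T (S :\: D1) C *: E K S T D1 C else 0)).
  apply: eq_bigr => J hJ.
  have dDJ : [disjoint D1 & J] by brute2.
  have eDJ : S :\: (S :\: (D1 :|: J)) = D1 :|: J by brute2.
  rewrite eDJ cardsUd //.
  case: (boolP (#|D1| + #|J| == k)%N) => /eqnatP e1.
    rewrite big_mkcondr /= (@sum_split _ _ (T :\: S) (S :&: T) T); try by brute2.
    apply: eq_bigr => C hC.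
    rewrite (bigD1 J) //= big1 ?addr0; last first.
      move=> J2 /andP[hJ2 nJ].
      have dCJ2 : [disjoint C & J2] by brute2.
      rewrite cardsUd //; case: ifP => // _.
      suff -> : s1 K S T (S :\: (D1 :|: J)) (C :|: J2) = 0 by rewrite scale0r.
      rewrite /s1; case: (boolP (J2 \subset J)) => h.
        have : ~~ (J \subset J2) by apply/negP => h'; move: nJ; rewrite eqEsubset h h'.
        case/subsetPn => x xJ xJ2.
        rewrite [wsign K (S :\: _) (T :\: _)]wsignN ?mulr0 //.
        apply/negP => /disjP /(_ x); apply.
          by rewrite eDJ inE xJ orbT.
        by memb x.
      case/subsetPn: h => x xJ2 xJ.
      rewrite [wsign K (S :\: _) (C :|: _)]wsignN ?mulr0 ?mul0r //.
      apply/negP => /disjP /(_ x); apply; last by rewrite inE xJ2 orbT.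
      by memb x.
    have dCJ : [disjoint C & J] by brute2.
    rewrite cardsUd //.
    have -> : ((#|C| + #|J| == k) = (#|C| == #|D1|) && (#|D1| <= k) && (#|J| == k - #|D1|))%N.
      exact: cond_eq.
    case: ifP => // /andP[/andP[/eqnatP hc _] _].
    rewrite SL1 //; congr (_ *: _).
    by rewrite /E; congr bas; brute2.
  rewrite big1 // => C hC; case: ifP => // /andP[/andP[_ h2] /eqnatP h3].
  by exfalso; apply: e1; set d := #|D1| in h2 h3 *; set j := #|J| in h3 *; lia.
rewrite exchange_big /=; apply: eq_bigr => C hC.
case: ifP => hcond.
  rewrite -scalerMnl -sum_count; apply: eq_bigr => J _.
  by [].
by rewrite scale0r big1.
Qed.



Lemma thB_term (K : fieldType) n a t (S T A : {set 'I_n}) :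
  #|S| = a -> A \subset T :\: S -> #|A| = t ->
  (wsign K A (T :\: A) * wsign K S A) *: thB K a t (S :|: A) (T :\: A) =
  \sum_(D1 : {set 'I_n} | D1 \subset S :\: T) \sum_(D2 : {set 'I_n} | D2 \subset A)
     (if (#|D1| + #|D2| == t)%N then
       s2 K S T A (D1 :|: D2) *: bas K ((S :|: A) :\: (D1 :|: D2)) ((D1 :|: D2) :|: (T :\: A))
      else 0).
Proof.
move=> hS hA hAt.
have dSA : [disjoint S & A] by brute2.
rewrite /thB sum_compl.
rewrite (eq_bigl (fun D : {set 'I_n} => (D \subset S :|: A) && (#|D| == t))); last first.
  move=> D; case: (boolP (D \subset S :|: A)) => //= h.
  have h2 := subset_leq_card (subsetIl (S :|: A) D).
  rewrite cardsD; rewrite (setIidPr h) cardsUd // hS hAt in h2 *.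
  by apply/idP/idP => /eqnatP e; apply/eqnatP; set d := #|D| in e h2 *; lia.
rewrite big_mkcondr scaler_sumr /=.
rewrite (eq_bigr (fun D : {set 'I_n} => if #|D| == t then s2 K S T A D *:
   bas K ((S :|: A) :\: D) (D :|: (T :\: A)) else 0)); last first.
  move=> D hD.
  have -> : (S :|: A) :\: ((S :|: A) :\: D) = D by brute2.
  by case: ifP; rewrite ?scaler0 // scalerA.
rewrite (@sum_split _ _ S A (S :|: A)) //.
rewrite (@sum_restrict _ _ (S :\: T) S); first last.
- move=> D hD hnD; rewrite big1 // => D2 hD2.
  case: ifP => _ //.
  case/subsetPn: hnD => x xD xS0.
  rewrite /s2 [wsign K (D :|: D2) (T :\: A)]wsignN ?mulr0 ?scale0r //.
  apply/negP => /disjP /(_ x); apply.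
    by rewrite inE xD.
  by memb x.
- by brute2.
apply: eq_bigr => D1 hD1; apply: eq_bigr => D2 hD2.
have dD : [disjoint D1 & D2] by brute2.
by rewrite cardsUd.
Qed.

Lemma cond_eq2 (c d j t : nat) :
  ((c + j == t) && (d + j == t) = (c == d) && (d <= t) && (j == t - d))%N.
Proof.
case: (c + j =P t) => e; case: (d + j =P t) => e1; case: (c =P d) => e2;
  case: (j =P (t - d)%N) => e3; case: leqP => e4 /=; first [done | exfalso; lia].
Qed.

Lemma Phi_expand (K : fieldType) n a t (S T : {set 'I_n}) :
  #|S| = a ->
  linext (thB K a t) (dB K t S T) =
  \sum_(D1 : {set 'I_n} | D1 \subset S :\: T)
     \sum_(C : {set 'I_n} | C \subset T :\: S)
     (if (#|C| == #|D1|) && (#|D1| <= t)%N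
      then s2 K S T C D1 *+ 'C(#|T :\: S| - #|D1|, t - #|D1|) else 0) *: E K S T D1 C.
Proof.
move=> hS; rewrite /dB linext_sum.
rewrite (eq_bigr (fun A : {set 'I_n} => (wsign K A (T :\: A) * wsign K S A) *:
   thB K a t (S :|: A) (T :\: A))); last by move=> A _; rewrite linext_scale linext_bas.
rewrite big_mkcondr /=.
rewrite (@sum_restrict _ _ (T :\: S) T); first last.
- move=> A hA hnA; case: ifP => _ //.
  case/subsetPn: hnA => x xA xT0.
  rewrite [wsign K S A]wsignN ?mulr0 ?scale0r //.
  apply/negP => /disjP /(_ x); apply => //.
  by memb x.
- by brute2.
rewrite (eq_bigr (fun A : {set 'I_n} =>
   \sum_(D2 : {set 'I_n} | D2 \subset A) \sum_(D1 : {set 'I_n} | D1 \subset S :\: T)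
     (if (#|A| == t) && (#|D1| + #|D2| == t)%N then
       s2 K S T A (D1 :|: D2) *: bas K ((S :|: A) :\: (D1 :|: D2)) ((D1 :|: D2) :|: (T :\: A))
      else 0))); last first.
  move=> A hA; case: (boolP (#|A| == t)) => /= hAt.
    rewrite thB_term //; last exact/eqnatP.
    by rewrite exchange_big.
  by rewrite big1 // => D2 _; rewrite big1.
rewrite sum_pairs.
rewrite (eq_bigr (fun C : {set 'I_n} =>
   \sum_(D1 : {set 'I_n} | D1 \subset S :\: T) \sum_(D2 : {set 'I_n} | D2 \subset (T :\: S) :\: C)
     (if (#|C| == #|D1|) && (#|D1| <= t)%N && (#|D2| == t - #|D1|)%N then
       s2 K S T C D1 *: E K S T D1 C else 0))); last first.
  move=> C hC; rewrite exchange_big /=; apply: eq_bigr => D1 hD1; apply: eq_bigr => D2 hD2.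
  have dCD : [disjoint C & D2] by brute2.
  rewrite cardsUd // cond_eq2.
  case: ifP => // /andP[/andP[/eqnatP hc _] _].
  rewrite SL2 //; congr (_ *: _).
  by rewrite /E; congr bas; brute2.
rewrite exchange_big /=; apply: eq_bigr => D1 hD1; apply: eq_bigr => C hC.
case: ifP => hcond; last by rewrite scale0r big1.
rewrite -scalerMnl.
have -> : (#|T :\: S| - #|D1|)%N = #|(T :\: S) :\: C|.
  move: hcond => /andP[/eqnatP <- _].
  by rewrite [RHS]cardsD (setIidPr hC).
by rewrite -sum_count.
Qed.



Lemma BL0 (K : fieldType) (m b k : nat) : (m <= b)%N ->
  \sum_(u < k.+1) ((-1) ^+ u * ('C(b - u, k - u))%:R * ('C(m, u))%:R : K)
  = ('C(b - m, k))%:R.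
Proof.
elim: m b k => [|m IH] b k hmb.
  rewrite big_ord_recl /= !subn0 bin0 mulr1 expr0 mul1r big1 ?addr0 //.
  by move=> i _; rewrite bin0n mulr0.
rewrite big_ord_recl /= expr0 mul1r !subn0 !bin0.
rewrite (eq_bigr (fun i : 'I_k => (-1) ^+ i.+1 * ('C(b - i.+1, k - i.+1))%:R * ('C(m, i.+1))%:R
   + (-1) ^+ i.+1 * ('C(b - i.+1, k - i.+1))%:R * ('C(m, i))%:R)); last first.
  by move=> i _; rewrite /bump /= add1n binS natrD mulrDr.
rewrite big_split /= addrA.
have -> : (('C(b, k))%:R : K) * 1 + \sum_(i < k) (-1) ^+ i.+1 * ('C(b - i.+1, k - i.+1))%:R * ('C(m, i.+1))%:R
   = ('C(b - m, k))%:R.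
  rewrite -(IH b k) ?(leq_trans (leqnSn m)) //.
  by rewrite big_ord_recl /= expr0 mul1r !subn0 bin0.
case: k => [|k].
  by rewrite big_ord0 addr0 !bin0.
have e := IH b.-1 k; rewrite (_ : (m <= b.-1)%N) in e; last by lia.
rewrite (eq_bigr (fun i : 'I_k.+1 => - ((-1) ^+ i * ('C(b.-1 - i, k - i))%:R * ('C(m, i))%:R))); last first.
  move=> i _; rewrite exprS mulN1r !mulNr; congr (- (_ * _ * _)).
  by congr ((_ : nat)%:R); congr 'C(_, _); lia.
rewrite sumrN e //.
have -> : (b - m = (b.-1 - m).+1)%N by case: b hmb {IH e} => // b' h; rewrite /= subSn.
rewrite binS natrD addrK; congr ((_ : nat)%:R); congr 'C(_, _); lia.
Qed.

Lemma BL (K : fieldType) (j m b k : nat) : (j <= k)%N -> (j <= m)%N -> (m <= b)%N ->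
  \sum_(t < k.+1) ((-1) ^+ t * ('C(b - t, k - t))%:R) *
     (if (j <= t)%N then ('C(m - j, t - j))%:R else 0)
  = (-1) ^+ j * ('C(b - m, k - j))%:R :> K.
Proof.
move=> hjk hjm hmb.
rewrite -(big_mkord xpredT (fun t => ((-1) ^+ t * ('C(b - t, k - t))%:R) *
     (if (j <= t)%N then ('C(m - j, t - j))%:R else 0) : K)).
rewrite (big_cat_nat (n := j)) //=; last by lia.
rewrite big_nat_cond big1 ?add0r; last first.
  by move=> t /andP[/andP[_ ht] _]; rewrite leqNgt ht mulr0.
rewrite -{1}(add0n j) big_addn big_mkord.
have -> : (k.+1 - j = (k - j).+1)%N by lia.
rewrite (eq_bigr (fun i : 'I_(k - j).+1 => (-1) ^+ j *
   ((-1) ^+ i * ('C((b - j) - i, (k - j) - i))%:R * ('C(m - j, i))%:R))); last first.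
  move=> i _; rewrite leq_addl exprD addnK.
  have -> : (b - (i + j) = b - j - i)%N by lia.
  have -> : (k - (i + j) = k - j - i)%N by lia.
  by rewrite !mulrA [(-1) ^+ j * _]mulrC.
rewrite -mulr_sumr BL0; last by lia.
by have -> : (b - j - (m - j) = b - m)%N by lia.
Qed.

Lemma core (K : fieldType) n a b k (S T : {set 'I_n}) :
  #|S| = a -> #|T| = b -> (k <= b)%N -> (k <= a)%N ->
  phB K a k S T = \sum_(t < k.+1) ((-1) ^+ t * ('C(b - t, k - t))%:R) *:
      linext (thB K a t) (dB K t S T).
Proof.
move=> hS hT hkb hka.
rewrite phB_expand //.
rewrite (eq_bigr (fun t : 'I_k.+1 => \sum_(D1 : {set 'I_n} | D1 \subset S :\: T)
   \sum_(C : {set 'I_n} | C \subset T :\: S)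
   (((-1) ^+ t * ('C(b - t, k - t))%:R) *
     (if (#|C| == #|D1|) && (#|D1| <= t)%N
      then s2 K S T C D1 *+ 'C(#|T :\: S| - #|D1|, t - #|D1|) else 0)) *: E K S T D1 C));
  last first.
  move=> t _; rewrite Phi_expand // scaler_sumr; apply: eq_bigr => D1 _.
  by rewrite scaler_sumr; apply: eq_bigr => C _; rewrite scalerA.
rewrite [RHS]exchange_big /=; apply: eq_bigr => D1 hD1.
rewrite [RHS]exchange_big /=; apply: eq_bigr => C hC.
rewrite -scaler_suml; congr (_ *: _).
case: (boolP (#|C| == #|D1|)) => /= hc; last by rewrite big1 // => t _; rewrite mulr0.
have hm : #|S :&: T| = (b - #|T :\: S|)%N.
  by rewrite -hT -(cardsID S T) setIC addnK.
have hdm : (#|D1| <= #|T :\: S|)%N by rewrite -(eqP hc) subset_leq_card.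
have hmb : (#|T :\: S| <= b)%N by rewrite -hT subset_leq_card // subsetDl.
case: (leqP #|D1| k) => hdk /=.
  rewrite SL3 //; last exact/eqP.
  rewrite (eq_bigr (fun t : 'I_k.+1 => s2 K S T C D1 * (((-1) ^+ t * ('C(b - t, k - t))%:R) *
     (if (#|D1| <= t)%N then ('C(#|T :\: S| - #|D1|, t - #|D1|))%:R else 0)))); last first.
    move=> t _; case: ifP => _; rewrite ?mulr0 //.
    by rewrite -mulr_natr; ring.
  by rewrite -mulr_sumr BL // hm -mulr_natr; ring.
rewrite big1 // => t _.
have : (t <= k)%N by rewrite -ltnS.
by move=> htk; rewrite leqNgt (leq_ltn_trans htk hdk) mulr0.
Qed.



Lemma wsign0l (K : fieldType) n (X : {set 'I_n}) : wsign K set0 X = 1.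
Proof.
rewrite wsignD ?invE ?big_set0 ?expr0 //.
by apply/disjP => x; rewrite inE.
Qed.

Lemma wsign0r (K : fieldType) n (X : {set 'I_n}) : wsign K X set0 = 1.
Proof.
rewrite wsignD ?invE; last by apply/disjP => x _; rewrite inE.
by rewrite big1 ?expr0 // => x _; rewrite big_set0.
Qed.

Lemma Phi0 (K : fieldType) n a b (x : tens K n) : in_bideg a b x -> Phi a 0 x = x.
Proof.
move=> hx; rewrite PhiE linext_comp [RHS]bas_expand; apply: eq_bigr => p _.
case: (eqVneq (x p) 0) => [->|xp]; first by rewrite !scale0r.
have [hS _] := hx p xp.
rewrite Phi_expand // (bigD1 set0) ?sub0set //= [X in _ + X]big1 ?addr0; last first.
  move=> D1 /andP[_ hD]; rewrite big1 // => C _.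
  rewrite leqn0 cards_eq0 (negbTE hD) andbF scale0r //.
rewrite (bigD1 set0) ?sub0set //= big1 ?addr0; last first.
  move=> C /andP[_ hC]; rewrite cards0 cards_eq0 (negbTE hC) /= scale0r //.
rewrite cards0 eqxx /= bin0 mulr1n /s2 !wsign0l !wsign0r !mulr1 scale1r /E.
by rewrite setD0 setU0 set0U setD0.
Qed.

Unset Implicit Arguments.

Theorem lemma4p3 (K : fieldType) (n a b k : nat) :
  [pchar K] =i pred0 ->
  (0 < k)%N -> (k <= b)%N -> (b <= a)%N ->
  forall x : tens K n, in_bideg a b x ->
    phi a k x
      = \sum_(t < k.+1) ((-1) ^+ t * ('C(b - t, k - t))%:R) *: Phi a t x
    /\ psi a b k x
      = \sum_(1 <= t < k.+1) ((-1) ^+ t.-1 * ('C(b - t, k - t))%:R) *: Phi a t x.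
Proof.
move=> _ hk0 hkb hba x hx.
have main : phi a k x
      = \sum_(t < k.+1) ((-1) ^+ t * ('C(b - t, k - t))%:R) *: Phi a t x.
  rewrite phiE /linext.
  rewrite (eq_bigr (fun t : 'I_k.+1 => \sum_p x p *: (((-1) ^+ t * ('C(b - t, k - t))%:R) *:
      linext (thB K a t) (dB K t p.1 p.2)))); last first.
    move=> t _; rewrite PhiE linext_comp scaler_sumr; apply: eq_bigr => p _.
    by rewrite !scalerA mulrC.
  rewrite exchange_big /=; apply: eq_bigr => p _.
  rewrite -scaler_sumr.
  case: (eqVneq (x p) 0) => [->|xp]; first by rewrite !scale0r.
  have [hS hT] := hx p xp.
  by rewrite (@core K n a b k) //; apply: leq_trans hba.
split => //.
rewrite /psi main big_ord_recl /= expr0 mul1r !subn0 (Phi0 hx) opprD addrA subrr add0r.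
rewrite big_add1 /= big_mkord -sumrN; apply: eq_bigr => i _.
by rewrite /bump /= add1n exprS mulN1r mulNr scaleNr opprK.
Qed.
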